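(* There exist a binary matrix $A$ and two binary column vectors $x,y$ such that $R_{bool}(A|x)=R_{bool}(A|y)=R_{bool}(A)$, but $R_{bool}(A|x,y)>R_{bool}(A)$.
   Context: For a binary $n\times m$ matrix $A$, $R_{bool}(A)$ is the least $k$ such that $A=UV$ with $U\in\{0,1\}^{n\times k}$, $V\in\{0,1\}^{k\times m}$ and the product computed in the Boolean semiring ($1+1=1$). $(A|x_1,\dots,x_t)$ denotes $A$ with columns $x_1,\dots,x_t$ appended on the right. *)

(* Defs.v *)
From mathcomp Require Import all_boot all_algebra.
Set Implicit Arguments. Unset Strict Implicit. Unset Printing Implicit Defensive.

Definition bool_mulmx (n k m : nat) (U : 'M[bool]_(n, k)) (V : 'M[bool]_(k, m))
  : 'M[bool]_(n, m) :=
  \matrix_(i < n, j < m) [exists l : 'I_k, U i l && V l j].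

Definition bool_factorizable (n m : nat) (A : 'M[bool]_(n, m)) (k : nat) : Prop :=
  exists (U : 'M[bool]_(n, k)) (V : 'M[bool]_(k, m)), A = bool_mulmx U V.

Lemma bool_factorizable_dec n m (A : 'M[bool]_(n, m)) k :
  decidable (bool_factorizable A k).
Proof.
case: (pickP (fun UV : 'M[bool]_(n, k) * 'M[bool]_(k, m) => A == bool_mulmx UV.1 UV.2)).
  by move=> [U V] /eqP /= ->; left; exists U, V.
by move=> H; right=> -[U [V E]]; move: (H (U, V)); rewrite /= E eqxx.
Qed.

Definition bool_factorizableb n m (A : 'M[bool]_(n, m)) : pred nat :=
  fun k => if bool_factorizable_dec A k then true else false.

Lemma bool_factorizableP n m (A : 'M[bool]_(n, m)) k :
  reflect (bool_factorizable A k) (bool_factorizableb A k).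
Proof. by rewrite /bool_factorizableb; case: bool_factorizable_dec => H; constructor. Qed.

Lemma bool_factorizable_ex n m (A : 'M[bool]_(n, m)) :
  exists k, bool_factorizableb A k.
Proof.
exists n; apply/bool_factorizableP; exists (\matrix_(i < n, j < n) (i == j))%R, A.
apply/matrixP=> i j; rewrite /bool_mulmx mxE.
apply/idP/existsP => [Hj|[l]].
  by exists i; rewrite !mxE eqxx.
by rewrite !mxE; case: eqP => [<-|].
Qed.

Definition rbool n m (A : 'M[bool]_(n, m)) : nat := ex_minn (bool_factorizable_ex A).

Definition append1 n m (A : 'M[bool]_(n, m)) (x : 'cV[bool]_n) : 'M[bool]_(n, m + 1) :=
  row_mx A x.
Definition append2 n m (A : 'M[bool]_(n, m)) (x y : 'cV[bool]_n) : 'M[bool]_(n, m + 2) :=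
  row_mx A (row_mx x y).

(* Main.v *)
Require Import Defs.
From mathcomp Require Import all_boot all_algebra.

Definition col_ok (u00 u01 u10 u11 u20 u21 u30 u31 c0 c1 c2 c3 : bool) :=
  has (fun v : bool * bool =>
    [&& c0 == (u00 && v.1) || (u01 && v.2), c1 == (u10 && v.1) || (u11 && v.2),
        c2 == (u20 && v.1) || (u21 && v.2) & c3 == (u30 && v.1) || (u31 && v.2)])
   [:: (true, true); (true, false); (false, true); (false, false)].

Lemma key u00 u01 u10 u11 u20 u21 u30 u31 :
  ~~ [&& col_ok u00 u01 u10 u11 u20 u21 u30 u31 true true false false,
         col_ok u00 u01 u10 u11 u20 u21 u30 u31 true true true true,
         col_ok u00 u01 u10 u11 u20 u21 u30 u31 true false true true &
         col_ok u00 u01 u10 u11 u20 u21 u30 u31 false true true true].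
Proof. by move: u00 u01 u10 u11 u20 u21 u30 u31; do 8!case. Qed.

Definition i0 : 'I_4 := @Ordinal 4 0 isT.
Definition i1 : 'I_4 := @Ordinal 4 1 isT.
Definition i2 : 'I_4 := @Ordinal 4 2 isT.
Definition i3 : 'I_4 := @Ordinal 4 3 isT.
Definition l0 : 'I_2 := @Ordinal 2 0 isT.
Definition l1 : 'I_2 := @Ordinal 2 1 isT.

Lemma ex2 (f : pred 'I_2) : [exists l, f l] = f l0 || f l1.
Proof.
apply/existsP/orP => [[[[|[|//]] Hl]] Hf|[]]; last 2 first.
- by exists l0.
- by exists l1.
- by left; rewrite (_ : l0 = Ordinal Hl) //; apply/val_inj.
- by right; rewrite (_ : l1 = Ordinal Hl) //; apply/val_inj.
Qed.

Lemma colP p (U : 'M[bool]_(4, 2)) (V : 'M[bool]_(2, p)) j :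
  col_ok (U i0 l0) (U i0 l1) (U i1 l0) (U i1 l1) (U i2 l0) (U i2 l1) (U i3 l0) (U i3 l1)
    (bool_mulmx U V i0 j) (bool_mulmx U V i1 j) (bool_mulmx U V i2 j) (bool_mulmx U V i3 j).
Proof.
apply/hasP; exists (V l0 j, V l1 j).
  by case: (V l0 j); case: (V l1 j).
by rewrite /bool_mulmx !mxE !ex2 /= !eqxx.
Qed.

Lemma low2 p (M : 'M[bool]_(4, p)) j0 j1 k :
  M i0 j0 -> M i2 j1 -> ~~ M i2 j0 -> bool_factorizable M k -> 1 < k.
Proof.
move=> H1 H2 H3 [U [V E]].
case: k U V E => [|[|//]] U V E.
  by move: H1; rewrite E mxE; case/existsP => -[].
move: H1 H2 H3; rewrite E !mxE.
case/existsP => l /andP [_ Hv]; case/existsP => l' /andP [Hu _].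
have e : forall l2 : 'I_1, l2 = ord0 by move=> [[|//] ?]; apply/val_inj.
rewrite (e l) in Hv; rewrite (e l') in Hu.
by case/existsP; exists ord0; rewrite Hu Hv.
Qed.

Definition A : 'M[bool]_(4, 2) := \matrix_(i < 4, j < 2) ((i < 2) || (j == 1 :> nat)).
Definition x : 'cV[bool]_4 := \col_(i < 4) (nat_of_ord i != 1).
Definition y : 'cV[bool]_4 := \col_(i < 4) (nat_of_ord i != 0).

Lemma rbool_eq n m (M : 'M[bool]_(n, m)) k :
  bool_factorizable M k -> (forall j, bool_factorizable M j -> k <= j) -> rbool M = k.
Proof.
move=> H1 H2; rewrite /rbool; case: ex_minnP => r /bool_factorizableP Hr Hmin.
apply/eqP; rewrite eqn_leq H2 // andbT; apply: Hmin; exact/bool_factorizableP.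
Qed.

Definition Ug (g : 'I_4 -> bool) : 'M[bool]_(4, 2) :=
  \matrix_(i < 4, l < 2) if nat_of_ord l == 0 then (i < 2) else g i.
Definition V1 : 'M[bool]_(2, 2 + 1) :=
  \matrix_(l < 2, j < 3) if nat_of_ord j == 0 then nat_of_ord l == 0
                         else if nat_of_ord j == 1 then true else nat_of_ord l == 1.

Lemma fx : append1 A x = bool_mulmx (Ug (fun i => nat_of_ord i != 1)) V1.
Proof.
apply/matrixP => i j; rewrite /append1 /bool_mulmx !mxE ex2 !mxE /=.
case: splitP => k Hk; rewrite !mxE Hk.
all: case: i => [[|[|[|[|//]]]] ?]; case: k Hk => [[|[|//]] ?] Hk //=.
Qed.

Lemma fy : append1 A y = bool_mulmx (Ug (fun i => nat_of_ord i != 0)) V1.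
Proof.
apply/matrixP => i j; rewrite /append1 /bool_mulmx !mxE ex2 !mxE /=.
case: splitP => k Hk; rewrite !mxE Hk.
all: case: i => [[|[|[|[|//]]]] ?]; case: k Hk => [[|[|//]] ?] Hk //=.
Qed.

Definition V0 : 'M[bool]_(2, 2) :=
  \matrix_(l < 2, j < 2) if nat_of_ord j == 0 then nat_of_ord l == 0 else true.

Lemma fA : A = bool_mulmx (Ug (fun i => nat_of_ord i != 1)) V0.
Proof.
apply/matrixP => i j; rewrite /bool_mulmx !mxE ex2 !mxE /=.
by case: i => [[|[|[|[|//]]]] ?]; case: j => [[|[|//]] ?].
Qed.

Lemma low1 (z : 'cV[bool]_4) j : bool_factorizable (append1 A z) j -> 1 < j.
Proof.
apply: (@low2 _ _ (lshift 1 l0) (lshift 1 l1)); by rewrite /append1 !row_mxEl !mxE.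
Qed.

Lemma split_l m n (j : 'I_m) : split (lshift n j) = inl j.
Proof. exact: (unsplitK (inl j)). Qed.
Lemma split_r m n (j : 'I_n) : split (rshift m j) = inr j.
Proof. exact: (unsplitK (inr j)). Qed.

Theorem mainTheorem8 :
  exists (n m : nat) (A : 'M[bool]_(n, m)) (x y : 'cV[bool]_n),
    rbool (append1 A x) = rbool A /\
    rbool (append1 A y) = rbool A /\
    rbool (append2 A x y) > rbool A.
Proof.
exists 4, 2, A, x, y.
have rA : rbool A = 2.
  apply: rbool_eq; first by rewrite fA; eexists; eexists.
  by move=> j; apply: (@low2 _ _ l0 l1); rewrite !mxE.
rewrite rA; split; [|split].
- apply: rbool_eq; first by rewrite fx; eexists; eexists.
  exact: low1.
- apply: rbool_eq; first by rewrite fy; eexists; eexists.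
  exact: low1.
- rewrite /rbool; case: ex_minnP => r /bool_factorizableP Hr _.
  have := Hr; move/(@low2 _ _ (lshift 2 l0) (lshift 2 l1)).
  rewrite /append2 !row_mxEl !mxE /= => /(_ isT isT isT).
  rewrite leq_eqVlt => /orP [/eqP E|//]; subst r.
  case: Hr => U [V E].
  have := key (U i0 l0) (U i0 l1) (U i1 l0) (U i1 l1) (U i2 l0) (U i2 l1) (U i3 l0) (U i3 l1).
  have c1 := colP _ U V (lshift 2 l0); have c2 := colP _ U V (lshift 2 l1).
  have c3 := colP _ U V (rshift 2 (lshift 1 (ord0 : 'I_1))); have c4 := colP _ U V (rshift 2 (rshift 1 (ord0 : 'I_1))).
  rewrite -!E /append2 !mxE ?split_l ?split_r /= ?mxE ?split_l ?split_r /= !mxE /= in c1 c2 c3 c4.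
  by rewrite c1 c2 c3 c4.
Qed.
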